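(* For all problems $f,g$: if $f\times\mathsf C_2\le_W\overline g$, then $f\le_W g$. Likewise, if $f\times\mathsf C_2\le_{sW}\overline g$, then $f\le_{sW}g$.
   Context: A problem $f:\subseteq X\rightrightarrows Y$ between represented spaces (sets with surjective partial $\delta:\subseteq\mathbb N^\mathbb N\to X$) is a partial multi-valued map with nonempty values on its domain; $F\vdash f$ means $\delta_YF(p)\in f(\delta_X(p))$ whenever $\delta_X(p)\in\mathrm{dom}(f)$. $f\le_W g$ iff there are computable partial $H,K$ with $H\langle\mathrm{id},GK\rangle\vdash f$ for all $G\vdash g$; $f\le_{sW}g$ iff there are computable $H,K$ with $HGK\vdash f$ for all $G\vdash g$. The product $f\times g$ maps $(x,u)\mapsto f(x)\times g(u)$ on $\mathrm{dom}(f)\times\mathrm{dom}(g)$. $\mathsf C_2:\subseteq\mathcal A_-(\{0,1\})\rightrightarrows\{0,1\}$, $A\mapsto A$ on nonempty $A$, where subsets of $\{0,1\}$ are given by negative information (an enumeration of the complement). For $p\in\mathbb{N}^\mathbb{N}$, $p-1$ is the concatenation of $p(0)-1,p(1)-1,\dots$ with $0-1$ the empty word; the completion of $(X,\delta_X)$ is $\overline X=X\cup\{\bot\}$ with $\delta_{\overline X}(p)=\delta_X(p-1)$ if $p-1$ is an infinite sequence in $\mathrm{dom}(\delta_X)$, $\bot$ otherwise; $\overline g:\overline U\rightrightarrows\overline V$ equals $g$ on $\mathrm{dom}(g)$ and $\overline V$ elsewhere. *)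

(* Defs.v *)
From Stdlib Require Import Arith List.
Import ListNotations.

Definition baire := nat -> nat.

Definition bpair (p q : baire) : baire :=
  fun n => if Nat.even n then p (Nat.div2 n) else q (Nat.div2 n).
Definition bfst (p : baire) : baire := fun n => p (2 * n).
Definition bsnd (p : baire) : baire := fun n => p (2 * n + 1).

(** Partial recursive (mu-recursive) functions on nat; arguments are lists,
    missing arguments default to 0. *)
Inductive recf : Type :=
| RZero
| RSucc
| RProj (i : nat)
| RComp (h : recf) (gs : list recf)
| RPrec (b s : recf)
| RMu (f : recf).

Inductive eval : recf -> list nat -> nat -> Prop :=
| ev_zero a : eval RZero a 0
| ev_succ a : eval RSucc a (S (hd 0 a))
| ev_proj i a : eval (RProj i) a (nth i a 0)
| ev_comp h gs a bs v : evals gs a bs -> eval h bs v -> eval (RComp h gs) a v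
| ev_prec0 b s a v : eval b a v -> eval (RPrec b s) (0 :: a) v
| ev_precS b s n a u v :
    eval (RPrec b s) (n :: a) u -> eval s (n :: u :: a) v -> eval (RPrec b s) (S n :: a) v
| ev_mu f a n :
    eval f (n :: a) 0 ->
    (forall m, m < n -> exists w, eval f (m :: a) (S w)) ->
    eval (RMu f) a n
with evals : list recf -> list nat -> list nat -> Prop :=
| evs_nil a : evals nil a nil
| evs_cons g gs a v vs : eval g a v -> evals gs a vs -> evals (g :: gs) a (v :: vs).

Definition cpair (x y : nat) : nat := (x + y) * (x + y + 1) / 2 + y.
Fixpoint code (l : list nat) : nat :=
  match l with nil => 0 | x :: l' => S (cpair x (code l')) end.
Definition prefix (p : baire) (k : nat) : list nat := map p (seq 0 k).

Definition pfun (F : baire -> baire -> Prop) : Prop :=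
  forall p q q', F p q -> F p q' -> q = q'.

(** Computable partial function F :⊆ N^N -> N^N: a machine [e] which, given an
    output index n and (the code of) a finite prefix of the input, either asks
    for more input (answer 0) or outputs the n-th output digit v (answer S v);
    on every p in dom F it answers for each n on some prefix, and all its
    answers are correct. (Equivalent to the usual Type-2 machine notion.) *)
Definition computable (F : baire -> baire -> Prop) : Prop :=
  exists e : recf, forall p q, F p q -> forall n,
    (exists k, eval e [n; code (prefix p k)] (S (q n))) /\
    (forall k v, eval e [n; code (prefix p k)] (S v) -> v = q n).

Record space := Space { carrier : Type; rep : baire -> carrier -> Prop }.
Arguments rep {_}.

Definition represented (X : space) : Prop :=
  (forall p (x x' : carrier X), rep p x -> rep p x' -> x = x') /\
  (forall x : carrier X, exists p, rep p x).

Definition problem (X Y : space) := carrier X -> carrier Y -> Prop.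
Definition pdom {X Y : space} (f : problem X Y) (x : carrier X) : Prop :=
  exists y, f x y.

Definition realizes {X Y : space} (f : problem X Y) (F : baire -> baire -> Prop) : Prop :=
  forall p x, rep p x -> pdom f x ->
    exists q y, F p q /\ rep q y /\ f x y.

Definition W_le {X Y U V : space} (f : problem X Y) (g : problem U V) : Prop :=
  exists H K, computable H /\ computable K /\
    forall G, pfun G -> realizes g G ->
      realizes f (fun p q => exists r s, K p r /\ G r s /\ H (bpair p s) q).

Definition sW_le {X Y U V : space} (f : problem X Y) (g : problem U V) : Prop :=
  exists H K, computable H /\ computable K /\
    forall G, pfun G -> realizes g G ->
      realizes f (fun p q => exists r s, K p r /\ G r s /\ H s q).

Definition prod_space (X Y : space) : space :=
  Space (carrier X * carrier Y)
        (fun p xy => rep (bfst p) (fst xy) /\ rep (bsnd p) (snd xy)).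

Definition prob_prod {X Y X' Y' : space} (f : problem X Y) (g : problem X' Y')
  : problem (prod_space X X') (prod_space Y Y') :=
  fun xu yv => f (fst xu) (fst yv) /\ g (snd xu) (snd yv).

(** A_-({0,1}): a subset A of {0,1} is the pair (0 ∈ A, 1 ∈ A); p names A iff
    the numbers n+1 occurring in p are exactly the n ∈ {0,1} with n ∉ A. *)
Definition Aminus2 : space :=
  Space (bool * bool)
        (fun p A => (fst A = true <-> ~ exists k, p k = 1) /\
                    (snd A = true <-> ~ exists k, p k = 2)).

Definition two_space : space :=
  Space bool (fun p b => p 0 = (if b then 1 else 0)).

Definition C2 : problem Aminus2 two_space :=
  fun A b => (if b then snd A else fst A) = true.

(** p - 1 : count of nonzero entries before position k, and
    [minus1 p q] := "p-1 is the infinite sequence q". *)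
Fixpoint cnt (p : baire) (k : nat) : nat :=
  match k with
  | 0 => 0
  | S k' => cnt p k' + (if p k' =? 0 then 0 else 1)
  end.
Definition minus1 (p q : baire) : Prop :=
  forall n, exists k, p k = S (q n) /\ cnt p k = n.

(** Completion: carrier X ∪ {⊥} = option X *)
Definition completion (X : space) : space :=
  Space (option (carrier X))
        (fun p o => match o with
                    | Some x => exists q, minus1 p q /\ rep q x
                    | None => ~ exists q (x : carrier X), minus1 p q /\ rep q x
                    end).

Definition compl_prob {U V : space} (g : problem U V)
  : problem (completion U) (completion V) :=
  fun u v => match u with
             | Some x => pdom g x -> exists y, v = Some y /\ g x y
             | None => True
             end.

(* Main.v *)
Require Import Defs.
From Stdlib Require Import Arith List Lia PeanoNat Classical FunctionalExtensionality.
Import ListNotations.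

Definition Imp (e: recf) (F: list nat -> nat) : Prop :=
  forall a, eval e a (F a) /\ forall v, eval e a v -> v = F a.

Lemma Imp_ext e F G : Imp e F -> (forall a, F a = G a) -> Imp e G.
Proof. intros H E a. rewrite <- E. apply H. Qed.

Lemma imp_zero : Imp RZero (fun _ => 0).
Proof. intros a; split; [constructor| intros v H; inversion H; auto]. Qed.

Lemma imp_succ : Imp RSucc (fun a => S (nth 0 a 0)).
Proof. intros a; split.
 - replace (nth 0 a 0) with (hd 0 a) by (destruct a; reflexivity). constructor.
 - intros v H; inversion H; subst; destruct a; reflexivity. Qed.

Lemma imp_proj i : Imp (RProj i) (fun a => nth i a 0).
Proof. intros a; split; [constructor| intros v H; inversion H; auto]. Qed.

Lemma inv_comp h gs a v : eval (RComp h gs) a v -> exists bs, evals gs a bs /\ eval h bs v.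
Proof. intros H; inversion H; subst; eauto. Qed.

Lemma inv_evals_cons g gs a bs : evals (g::gs) a bs -> exists v vs, bs = v :: vs /\ eval g a v /\ evals gs a vs.
Proof. intros H; inversion H; subst; eauto. Qed.

Lemma inv_evals_nil a bs : evals [] a bs -> bs = [].
Proof. intros H; inversion H; auto. Qed.

Lemma inv_prec0 b s a v : eval (RPrec b s) (0::a) v -> eval b a v.
Proof. intros H; inversion H; subst; auto. Qed.

Lemma inv_precS b s n a v : eval (RPrec b s) (S n::a) v ->
  exists u, eval (RPrec b s) (n::a) u /\ eval s (n::u::a) v.
Proof. intros H; inversion H; subst; eauto. Qed.

Lemma evals_imp gs Gs : Forall2 Imp gs Gs -> forall a,
  evals gs a (map (fun G => G a) Gs) /\ forall bs, evals gs a bs -> bs = map (fun G => G a) Gs.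
Proof. induction 1; intros a; split.
 - constructor.
 - intros bs Hb; apply inv_evals_nil in Hb; auto.
 - simpl. constructor; [apply H | apply IHForall2].
 - intros bs Hb. apply inv_evals_cons in Hb as (v & vs & -> & H1 & H2). simpl.
   f_equal; [apply (proj2 (H a)); auto | apply (proj2 (IHForall2 a)); auto].
Qed.

Lemma comp_iff h gs Gs a v : Forall2 Imp gs Gs ->
  (eval (RComp h gs) a v <-> eval h (map (fun G => G a) Gs) v).
Proof. intros HF. destruct (evals_imp _ _ HF a) as [E1 E2]. split.
 - intros H. apply inv_comp in H as (bs & Hb & Hh). rewrite <- (E2 _ Hb). auto.
 - intros H. econstructor; eauto.
Qed.

Lemma imp_comp h H gs Gs : Imp h H -> Forall2 Imp gs Gs ->
  Imp (RComp h gs) (fun a => H (map (fun G => G a) Gs)).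
Proof. intros Hh HF a. split.
 - apply (comp_iff _ _ _ _ _ HF). apply Hh.
 - intros v Hv. apply (comp_iff _ _ _ _ _ HF) in Hv. apply Hh; auto.
Qed.

Fixpoint prf (B St: list nat -> nat) (n: nat) (rest: list nat) : nat :=
  match n with 0 => B rest | S m => St (m :: prf B St m rest :: rest) end.

Lemma prec_imp b s B St : Imp b B -> Imp s St -> forall n rest,
  eval (RPrec b s) (n::rest) (prf B St n rest) /\
  forall v, eval (RPrec b s) (n::rest) v -> v = prf B St n rest.
Proof. intros Hb Hs n rest. induction n as [|n IH]; split.
 - constructor. apply Hb.
 - intros v Hv. apply inv_prec0 in Hv. apply Hb; auto.
 - simpl. econstructor. apply IH. apply Hs.
 - intros v Hv. apply inv_precS in Hv as (u & H1 & H2).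
   apply (proj2 IH) in H1. subst. simpl. apply Hs; auto.
Qed.

Lemma imp_cprec b s B St g gs G Gs : Imp b B -> Imp s St -> Forall2 Imp (g::gs) (G::Gs) ->
  Imp (RComp (RPrec b s) (g::gs)) (fun a => prf B St (G a) (map (fun G => G a) Gs)).
Proof. intros Hb Hs HF a. split.
 - apply (comp_iff _ _ _ _ _ HF). simpl. apply prec_imp; auto.
 - intros v Hv. apply (comp_iff _ _ _ _ _ HF) in Hv. simpl in Hv.
   apply (prec_imp _ _ _ _ Hb Hs) in Hv; auto.
Qed.

Fixpoint constE k := match k with 0 => RZero | S k => RComp RSucc [constE k] end.
Lemma imp_const k : Imp (constE k) (fun _ => k).
Proof. induction k.
 - apply imp_zero.
 - eapply Imp_ext. apply imp_comp. apply imp_succ. constructor. apply IHk. constructor.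
   intros a; reflexivity.
Qed.

Create HintDb imp.
Ltac imp_tac :=
  lazymatch goal with
  | |- Imp RZero _ => apply imp_zero
  | |- Imp RSucc _ => apply imp_succ
  | |- Imp (RProj _) _ => apply imp_proj
  | |- Imp (constE _) _ => apply imp_const
  | |- Imp (RComp (RPrec _ _) (_ :: _)) _ => eapply imp_cprec; [imp_tac | imp_tac | imps_tac]
  | |- Imp (RComp _ _) _ => eapply imp_comp; [imp_tac | imps_tac]
  | |- Imp _ _ => eauto with imp
  end
with imps_tac := lazymatch goal with
  | |- Forall2 Imp [] _ => apply Forall2_nil
  | |- Forall2 Imp (_ :: _) _ => apply Forall2_cons; [imp_tac | imps_tac]
  end.

Ltac mk e := eapply Imp_ext; [unfold e; imp_tac|]; intros a; cbn [map nth].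

Definition addE := RComp (RPrec (RProj 0) (RComp RSucc [RProj 1])) [RProj 0; RProj 1].
Lemma addE_ok : Imp addE (fun a => nth 0 a 0 + nth 1 a 0).
Proof. mk addE. induction (nth 0 a 0); cbn [prf nth map]; lia. Qed.
Hint Resolve addE_ok : imp.

Definition mulE := RComp (RPrec RZero (RComp addE [RProj 1; RProj 2])) [RProj 0; RProj 1].
Lemma mulE_ok : Imp mulE (fun a => nth 0 a 0 * nth 1 a 0).
Proof. mk mulE. induction (nth 0 a 0); cbn [prf nth map]; lia. Qed.
Hint Resolve mulE_ok : imp.
Definition predE := RComp (RPrec RZero (RProj 0)) [RProj 0].
Lemma predE_ok : Imp predE (fun a => pred (nth 0 a 0)).
Proof. mk predE. destruct (nth 0 a 0); simpl; auto. Qed.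
Hint Resolve predE_ok : imp.

Definition subE := RComp (RPrec (RProj 0) (RComp predE [RProj 1])) [RProj 1; RProj 0].
Lemma subE_ok : Imp subE (fun a => nth 0 a 0 - nth 1 a 0).
Proof. mk subE. generalize (nth 0 a 0) as x. induction (nth 1 a 0); intros x; cbn [prf nth map].
 - lia.
 - rewrite IHn. lia. Qed.
Hint Resolve subE_ok : imp.

Definition b2 (b: bool) := if b then 1 else 0.

Definition lebE := RComp subE [constE 1; subE].
Lemma lebE_ok : Imp lebE (fun a => b2 (nth 0 a 0 <=? nth 1 a 0)).
Proof. mk lebE. unfold b2. destruct (Nat.leb_spec (nth 0 a 0) (nth 1 a 0)); lia. Qed.
Hint Resolve lebE_ok : imp.

Definition sgE := RComp subE [constE 1; RComp subE [constE 1; RProj 0]].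
Lemma sgE_ok : Imp sgE (fun a => b2 (negb (nth 0 a 0 =? 0))).
Proof. mk sgE. unfold b2. destruct (nth 0 a 0); simpl; lia. Qed.
Hint Resolve sgE_ok : imp.

Definition eqbE := RComp mulE [lebE; RComp lebE [RProj 1; RProj 0]].
Lemma eqbE_ok : Imp eqbE (fun a => b2 (nth 0 a 0 =? nth 1 a 0)).
Proof. mk eqbE. unfold b2. destruct (Nat.leb_spec (nth 0 a 0) (nth 1 a 0));
  destruct (Nat.leb_spec (nth 1 a 0) (nth 0 a 0)); destruct (Nat.eqb_spec (nth 0 a 0) (nth 1 a 0)); lia. Qed.
Hint Resolve eqbE_ok : imp.

Fixpoint tri s := match s with 0 => 0 | S m => tri m + S m end.
Definition triE := RComp (RPrec RZero (RComp addE [RProj 1; RComp RSucc [RProj 0]])) [RProj 0].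
Lemma triE_ok : Imp triE (fun a => tri (nth 0 a 0)).
Proof. mk triE. induction (nth 0 a 0); cbn [prf nth map]; [reflexivity| rewrite IHn; reflexivity]. Qed.
Hint Resolve triE_ok : imp.

Fixpoint diag z := match z with 0 => 0 | S m => diag m + b2 (tri (S (diag m)) <=? S m) end.
Definition diagE := RComp (RPrec RZero (RComp addE [RProj 1; RComp lebE [RComp triE [RComp RSucc [RProj 1]]; RComp RSucc [RProj 0]]])) [RProj 0].
Lemma diagE_ok : Imp diagE (fun a => diag (nth 0 a 0)).
Proof. mk diagE. induction (nth 0 a 0); cbn [prf nth map]; [reflexivity| rewrite IHn; reflexivity]. Qed.
Hint Resolve diagE_ok : imp.

Definition unsnd z := z - tri (diag z).
Definition unfst z := diag z - unsnd z.
Definition unsndE := RComp subE [RProj 0; RComp triE [diagE]].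
Lemma unsndE_ok : Imp unsndE (fun a => unsnd (nth 0 a 0)).
Proof. mk unsndE. reflexivity. Qed.
Hint Resolve unsndE_ok : imp.
Definition unfstE := RComp subE [diagE; unsndE].
Lemma unfstE_ok : Imp unfstE (fun a => unfst (nth 0 a 0)).
Proof. mk unfstE. reflexivity. Qed.
Hint Resolve unfstE_ok : imp.

Definition tl c := unsnd (pred c).
Definition hd' c := unfst (pred c).
Definition tlE := RComp unsndE [predE].
Lemma tlE_ok : Imp tlE (fun a => tl (nth 0 a 0)).
Proof. mk tlE. reflexivity. Qed.
Hint Resolve tlE_ok : imp.
Definition hdE := RComp unfstE [predE].
Lemma hdE_ok : Imp hdE (fun a => hd' (nth 0 a 0)).
Proof. mk hdE. reflexivity. Qed.
Hint Resolve hdE_ok : imp.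

Fixpoint itl i c := match i with 0 => c | S m => tl (itl m c) end.
Definition itlE := RComp (RPrec (RProj 0) (RComp tlE [RProj 1])) [RProj 0; RProj 1].
Lemma itlE_ok : Imp itlE (fun a => itl (nth 0 a 0) (nth 1 a 0)).
Proof. mk itlE. induction (nth 0 a 0); cbn [prf nth map]; [reflexivity| rewrite IHn; reflexivity]. Qed.
Hint Resolve itlE_ok : imp.

Definition nthc i c := hd' (itl i c).
Definition nthcE := RComp hdE [itlE].
Lemma nthcE_ok : Imp nthcE (fun a => nthc (nth 0 a 0) (nth 1 a 0)).
Proof. mk nthcE. reflexivity. Qed.
Hint Resolve nthcE_ok : imp.

Fixpoint lenAux m c := match m with 0 => 0 | S m' => lenAux m' c + b2 (negb (itl m' c =? 0)) end.
Definition lenc c := lenAux c c.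
Definition lenE := RComp (RPrec RZero (RComp addE [RProj 1; RComp sgE [RComp itlE [RProj 0; RProj 2]]])) [RProj 0; RProj 0].
Lemma lenE_ok : Imp lenE (fun a => lenc (nth 0 a 0)).
Proof. mk lenE. unfold lenc. remember (nth 0 a 0) as c. clear Heqc.
  match goal with |- prf ?B ?St c [c] = _ => assert (E: forall m, prf B St m [c] = lenAux m c) end.
  { induction m; cbn [prf nth map]; [reflexivity| rewrite IHm; reflexivity]. }
  apply E. Qed.
Hint Resolve lenE_ok : imp.

Definition cpairE := RComp addE [RComp triE [addE]; RProj 1].
Lemma cpairE_ok : Imp cpairE (fun a => tri (nth 0 a 0 + nth 1 a 0) + nth 1 a 0).
Proof. mk cpairE. reflexivity. Qed.
Hint Resolve cpairE_ok : imp.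

Fixpoint hv m := match m with 0 => 0 | S m' => hv m' + (m' - (hv m' + hv m')) end.
Definition hvE := RComp (RPrec RZero (RComp addE [RProj 1; RComp subE [RProj 0; RComp addE [RProj 1; RProj 1]]])) [RProj 0].
Lemma hvE_ok : Imp hvE (fun a => hv (nth 0 a 0)).
Proof. mk hvE. induction (nth 0 a 0); cbn [prf nth map]; [reflexivity| rewrite IHn; reflexivity]. Qed.
Hint Resolve hvE_ok : imp.

Fixpoint bld (F: nat -> nat -> nat) t j c := match t with 0 => 0
  | S t' => S (tri (F (pred j - t') c + bld F t' j c) + bld F t' j c) end.
Definition bldE fe := RComp (RPrec RZero (RComp RSucc [RComp cpairE [RComp fe [RComp subE [RComp predE [RProj 2]; RProj 0]; RProj 3]; RProj 1]])) [RProj 0; RProj 0; RProj 1].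
Lemma bldE_ok fe F : Imp fe (fun a => F (nth 0 a 0) (nth 1 a 0)) ->
  Imp (bldE fe) (fun a => bld F (nth 0 a 0) (nth 0 a 0) (nth 1 a 0)).
Proof. intros HF. mk bldE. remember (nth 0 a 0) as j. remember (nth 1 a 0) as c. clear Heqj Heqc.
  match goal with |- prf ?B ?St j [j; c] = _ => assert (E: forall m, prf B St m [j;c] = bld F m j c) end.
  { induction m; cbn [prf nth map]; [reflexivity| rewrite IHm; reflexivity]. }
  apply E. Qed.

Lemma hv_spec m : hv m = Nat.div2 m /\ m = 2 * hv m + b2 (Nat.odd m).
Proof. induction m as [|m [IH1 IH2]].
 - simpl. auto.
 - assert (Ho : Nat.odd (S m) = negb (Nat.odd m)).
   { rewrite Nat.odd_succ, <- Nat.negb_odd. reflexivity. }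
   pose proof (Nat.div2_odd (S m)) as D. rewrite Ho in *.
   simpl hv. unfold b2 in *. destruct (Nat.odd m); cbn [negb Nat.b2n] in *; split; lia.
Qed.

Definition evn i := b2 (Nat.even i).
Lemma evn_hv i : evn i = 1 - (i - (hv i + hv i)).
Proof. destruct (hv_spec i) as [_ H]. unfold evn, b2 in *. rewrite <- Nat.negb_odd.
  destruct (Nat.odd i); cbn [negb] in *; lia. Qed.

Definition evnE := RComp subE [constE 1; RComp subE [RProj 0; RComp addE [hvE; hvE]]].
Lemma evnE_ok : Imp evnE (fun a => evn (nth 0 a 0)).
Proof. mk evnE. rewrite evn_hv. reflexivity. Qed.
Hint Resolve evnE_ok : imp.
Definition d2E := hvE.
Lemma d2E_ok : Imp d2E (fun a => Nat.div2 (nth 0 a 0)).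
Proof. mk d2E. apply hv_spec. Qed.
Hint Resolve d2E_ok : imp.

Definition tk i c := evn i * nthc (Nat.div2 i) c.
Definition tkE := RComp mulE [evnE; RComp nthcE [d2E; RProj 1]].
Lemma tkE_ok : Imp tkE (fun a => tk (nth 0 a 0) (nth 1 a 0)).
Proof. mk tkE. reflexivity. Qed.
Hint Resolve tkE_ok : imp.

Definition tw i c := evn i * (evn (Nat.div2 i) * nthc (2 * Nat.div2 (Nat.div2 i)) c)
   + (1 - evn i) * S (nthc (2 * Nat.div2 i + 1) c).
Definition twE := RComp addE [RComp mulE [evnE; RComp mulE [RComp evnE [d2E];
     RComp nthcE [RComp addE [RComp d2E [d2E]; RComp d2E [d2E]]; RProj 1]]];
   RComp mulE [RComp subE [constE 1; evnE]; RComp RSucc [RComp nthcE [RComp RSucc [RComp addE [d2E; d2E]]; RProj 1]]]].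
Lemma twE_ok : Imp twE (fun a => tw (nth 0 a 0) (nth 1 a 0)).
Proof. mk twE. unfold tw. f_equal; f_equal; [f_equal; f_equal; lia | f_equal; f_equal; lia]. Qed.
Hint Resolve twE_ok : imp.

Definition tsw i c := S (nthc i c).
Definition tswE := RComp RSucc [nthcE].
Lemma tswE_ok : Imp tswE (fun a => tsw (nth 0 a 0) (nth 1 a 0)).
Proof. mk tswE. reflexivity. Qed.
Hint Resolve tswE_ok : imp.

Lemma tri2 s : tri s * 2 = s * (s + 1).
Proof. induction s; simpl; nia. Qed.
Lemma cpair_tri x y : cpair x y = tri (x + y) + y.
Proof. unfold cpair. rewrite <- tri2. rewrite Nat.div_mul by lia. reflexivity. Qed.
Lemma tri_mono s s' : s <= s' -> tri s <= tri s'.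
Proof. induction 1; simpl; lia. Qed.
Lemma tri_ge s : s <= tri s.
Proof. induction s; simpl; lia. Qed.
Lemma diag_spec z : tri (diag z) <= z < tri (S (diag z)).
Proof. induction z as [|z IH]. simpl; lia.
  cbn [diag]. unfold b2. destruct (Nat.leb_spec (tri (S (diag z))) (S z));
  rewrite ?Nat.add_0_r, ?Nat.add_1_r; cbn [tri] in *; lia. Qed.
Lemma diag_uniq z s : tri s <= z < tri (S s) -> diag z = s.
Proof. intros H. pose proof (diag_spec z).
  destruct (Nat.lt_trichotomy (diag z) s) as [L|[E|L]]; auto.
  - apply tri_mono in L. lia.
  - apply tri_mono in L. lia. Qed.
Lemma unpair_ok x y : unfst (cpair x y) = x /\ unsnd (cpair x y) = y.
Proof. rewrite cpair_tri. assert (diag (tri (x+y) + y) = x + y).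
  { apply diag_uniq. simpl. lia. }
  unfold unfst, unsnd. rewrite H. lia. Qed.
Lemma unsnd_le z : unsnd z <= z.
Proof. unfold unsnd. lia. Qed.
Lemma unfst_le z : unfst z <= z.
Proof. unfold unfst. pose proof (diag_spec z). pose proof (tri_ge (diag z)). lia. Qed.

Lemma tl_code l : tl (code l) = code (List.tl l).
Proof. destruct l; simpl. reflexivity. unfold tl. simpl. apply unpair_ok. Qed.
Lemma hd_code l : hd' (code l) = hd 0 l.
Proof. destruct l; simpl. reflexivity. unfold hd'. simpl. apply unpair_ok. Qed.
Lemma skipnS_tl (i: nat) (l: list nat) : skipn (S i) l = List.tl (skipn i l).
Proof. revert i; induction l; intros [|i]; simpl; auto. rewrite <- IHl. reflexivity. Qed.
Lemma itl_code i l : itl i (code l) = code (skipn i l).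
Proof. induction i; cbn [itl]. reflexivity. rewrite IHi, tl_code, skipnS_tl. reflexivity. Qed.
Lemma nth_skipn_hd i (l: list nat) : nth i l 0 = hd 0 (skipn i l).
Proof. revert i; induction l; intros [|i]; simpl; auto. Qed.
Lemma nthc_code i l : nthc i (code l) = nth i l 0.
Proof. unfold nthc. rewrite itl_code, hd_code, nth_skipn_hd. reflexivity. Qed.
Lemma code_ge l : length l <= code l.
Proof. induction l; simpl. lia. rewrite cpair_tri. lia. Qed.
Lemma code0 l : code l = 0 <-> l = [].
Proof. destruct l; simpl; split; congruence. Qed.
Lemma lenAux_code m l : lenAux m (code l) = Nat.min m (length l).
Proof. induction m; cbn [lenAux]. lia. rewrite IHm, itl_code.
  destruct (Nat.eqb_spec (code (skipn m l)) 0) as [E|E]; unfold b2; cbn [negb].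
  - apply code0 in E. pose proof (length_skipn m l) as H. rewrite E in H. simpl in H. lia.
  - assert (skipn m l <> []) by (intro X; apply E, code0, X).
    assert (m < length l). { destruct (Nat.lt_ge_cases m (length l)); auto.
      exfalso; apply H, skipn_all2; auto. } lia. Qed.
Lemma lenc_code l : lenc (code l) = length l.
Proof. unfold lenc. rewrite lenAux_code. pose proof (code_ge l). lia. Qed.
Lemma tl_le c : tl c <= c.
Proof. unfold tl. pose proof (unsnd_le (pred c)). lia. Qed.
Lemma itl_le i c : itl i c <= c.
Proof. induction i; simpl. lia. pose proof (tl_le (itl i c)). lia. Qed.
Lemma nthc_le i c : nthc i c <= c.
Proof. unfold nthc, hd'. pose proof (unfst_le (pred (itl i c))). pose proof (itl_le i c). lia. Qed.

Lemma bld_ok F j c t : t <= j -> bld F t j c = code (map (fun i => F i c) (seq (j - t) t)).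
Proof. induction t; intros H; simpl. reflexivity.
  rewrite IHt by lia. replace (j - t) with (S (j - S t)) by lia. simpl.
  rewrite cpair_tri. replace (Init.Nat.pred j - t) with (j - S t) by lia. reflexivity. Qed.
Lemma bld_full F j c : bld F j j c = code (map (fun i => F i c) (seq 0 j)).
Proof. rewrite bld_ok by lia. rewrite Nat.sub_diag. reflexivity. Qed.

Lemma prefix_len p k : lenc (code (prefix p k)) = k.
Proof. rewrite lenc_code. unfold prefix. rewrite length_map, length_seq. reflexivity. Qed.
Lemma prefix_nth p k i : i < k -> nthc i (code (prefix p k)) = p i.
Proof. intros H. rewrite nthc_code. unfold prefix.
  rewrite nth_indep with (d' := p 0) by (rewrite length_map, length_seq; auto).
  rewrite map_nth, seq_nth; auto. Qed.

Definition zero : baire := fun _ => 0.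
Definition TW (z: baire) : baire := bpair (bpair (bfst z) zero) (fun m => S (bsnd z m)).
Definition TS (s: baire) : baire := fun m => S (s m).

Lemma div2_le i : Nat.div2 i <= i.
Proof. destruct (hv_spec i) as [H1 H2]. rewrite <- H1. lia. Qed.
Lemma div2_2le i : 2 * Nat.div2 i <= i.
Proof. destruct (hv_spec i) as [H1 H2]. rewrite <- H1. lia. Qed.
Lemma evn_cases i : (Nat.even i = true /\ evn i = 1) \/ (Nat.even i = false /\ evn i = 0).
Proof. unfold evn, b2. destruct (Nat.even i); auto. Qed.
Lemma odd_eq i : Nat.even i = false -> i = 2 * Nat.div2 i + 1.
Proof. intros H. destruct (hv_spec i) as [H1 H2]. rewrite <- H1. unfold b2 in H2.
  rewrite <- Nat.negb_odd in H. destruct (Nat.odd i); simpl in H; [lia|discriminate]. Qed.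

Lemma trans_K p k j : j <= k -> bld tk j j (code (prefix p k)) = code (prefix (bpair p zero) j).
Proof. intros Hj. rewrite bld_full. unfold prefix at 2. f_equal. apply map_ext_in.
  intros i Hi. apply in_seq in Hi. unfold tk, bpair. pose proof (div2_le i).
  destruct (evn_cases i) as [[E1 E2]|[E1 E2]]; rewrite E1, E2.
  - rewrite prefix_nth by lia. lia.
  - reflexivity. Qed.

Lemma trans_W z k : bld tw k k (code (prefix z k)) = code (prefix (TW z) k).
Proof. rewrite bld_full. unfold prefix at 2. f_equal. apply map_ext_in.
  intros i Hi. apply in_seq in Hi. unfold tw, TW, bpair, bfst, bsnd.
  pose proof (div2_le i). pose proof (div2_2le (Nat.div2 i)).
  destruct (evn_cases i) as [[E1 E2]|[E1 E2]]; rewrite E1, E2.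
  - destruct (evn_cases (Nat.div2 i)) as [[F1 F2]|[F1 F2]]; rewrite F1, F2.
    + rewrite prefix_nth by lia. lia.
    + unfold zero. lia.
  - pose proof (odd_eq i E1). rewrite (prefix_nth z k (2 * Nat.div2 i + 1)) by lia. lia. Qed.

Lemma trans_S s k : bld tsw k k (code (prefix s k)) = code (prefix (TS s) k).
Proof. rewrite bld_full. unfold prefix at 2. f_equal. apply map_ext_in.
  intros i Hi. apply in_seq in Hi. unfold tsw, TS. rewrite prefix_nth by lia. reflexivity. Qed.

Ltac comp_rw := match goal with |- context [eval (RComp _ ?gs) _ _] =>
  let HF := fresh "HF" in eassert (HF : Forall2 Imp gs _) by imps_tac;
  rewrite (comp_iff _ _ _ _ _ HF); clear HF; cbn [map nth] end.

Definition HWm e := RComp e [RComp mulE [constE 2; RProj 0]; RComp (bldE twE) [RComp lenE [RProj 1]; RProj 1]].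
Hint Resolve bldE_ok : imp.
Lemma HWm_iff e n c v : eval (HWm e) [n; c] v <-> eval e [2 * n; bld tw (lenc c) (lenc c) c] v.
Proof. unfold HWm. comp_rw. reflexivity. Qed.

Definition HSm e := RComp e [RComp mulE [constE 2; RProj 0]; RComp (bldE tswE) [RComp lenE [RProj 1]; RProj 1]].
Lemma HSm_iff e n c v : eval (HSm e) [n; c] v <-> eval e [2 * n; bld tsw (lenc c) (lenc c) c] v.
Proof. unfold HSm. comp_rw. reflexivity. Qed.

Lemma HW_comp H0 : computable H0 -> computable (fun z q' => exists q, H0 (TW z) q /\ q' = bfst q).
Proof. intros [e He]. exists (HWm e). intros z q' [q [Hq ->]] n. split.
  - destruct (proj1 (He _ _ Hq (2 * n))) as [j Hj]. exists j.
    apply HWm_iff. rewrite prefix_len, trans_W. exact Hj.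
  - intros k v Hv. apply HWm_iff in Hv. rewrite prefix_len, trans_W in Hv.
    apply (proj2 (He _ _ Hq (2 * n))) in Hv. exact Hv.
Qed.

Lemma HS_comp H0 : computable H0 -> computable (fun s q' => exists q, H0 (TS s) q /\ q' = bfst q).
Proof. intros [e He]. exists (HSm e). intros z q' [q [Hq ->]] n. split.
  - destruct (proj1 (He _ _ Hq (2 * n))) as [j Hj]. exists j.
    apply HSm_iff. rewrite prefix_len, trans_S. exact Hj.
  - intros k v Hv. apply HSm_iff in Hv. rewrite prefix_len, trans_S in Hv.
    apply (proj2 (He _ _ Hq (2 * n))) in Hv. exact Hv.
Qed.

Definition upd u w := b2 (negb (u =? 0)) * b2 (negb (w =? 0)) * (u + b2 (negb (pred w =? 0))).
Definition updE := RComp mulE [RComp mulE [RComp sgE [RProj 0]; RComp sgE [RProj 1]];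
   RComp addE [RProj 0; RComp sgE [RComp predE [RProj 1]]]].
Lemma updE_ok : Imp updE (fun a => upd (nth 0 a 0) (nth 1 a 0)).
Proof. mk updE. reflexivity. Qed.
Hint Resolve updE_ok : imp.

Definition fin n s w := b2 (s =? S n) * b2 (2 <=? w) * pred w.
Definition finE := RComp mulE [RComp mulE [RComp eqbE [RProj 1; RComp RSucc [RProj 0]];
   RComp lebE [constE 2; RProj 2]]; RComp predE [RProj 2]].
Lemma finE_ok : Imp finE (fun a => fin (nth 0 a 0) (nth 1 a 0) (nth 2 a 0)).
Proof. mk finE. reflexivity. Qed.
Hint Resolve finE_ok : imp.

Definition GU e x c := RComp e [x; RComp (bldE tkE) [RComp nthcE [x; RComp lenE [c]]; c]].
Lemma GU_iff e x c X C a v : Imp x X -> Imp c C ->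
  (eval (GU e x c) a v <-> eval e [X a; bld tk (nthc (X a) (lenc (C a))) (nthc (X a) (lenc (C a))) (C a)] v).
Proof. intros HX HC. unfold GU. comp_rw. reflexivity. Qed.

Definition STEP e := RComp updE [RProj 1; GU e (RProj 0) (RProj 2)].
Definition Mt := RComp predE [RComp lenE [RComp lenE [RProj 1]]].
Definition LOOP e := RComp (RPrec (constE 1) (STEP e)) [Mt; RProj 1].
Definition KM e := RComp finE [RProj 0; LOOP e; GU e Mt (RProj 1)].
Lemma Mt_ok : Imp Mt (fun a => pred (lenc (lenc (nth 1 a 0)))).
Proof. mk Mt. reflexivity. Qed.
Hint Resolve Mt_ok : imp.

Definition Ecall e t c v := eval e [t; bld tk (nthc t (lenc c)) (nthc t (lenc c)) c] v.

Lemma STEP_inv e t u c v : eval (STEP e) [t; u; c] v -> exists w, Ecall e t c w /\ v = upd u w.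
Proof. intros H. apply inv_comp in H as (bs & Hb & Hh).
  apply inv_evals_cons in Hb as (v1 & vs & -> & H1 & Hb).
  apply inv_evals_cons in Hb as (v2 & vs' & -> & H2 & Hb). apply inv_evals_nil in Hb. subst.
  apply (proj2 (imp_proj 1 _)) in H1. simpl in H1. subst.
  rewrite (GU_iff _ _ _ (fun a => nth 0 a 0) (fun a => nth 2 a 0)) in H2 by (apply imp_proj).
  exists v2. split. exact H2. apply (proj2 (updE_ok _)) in Hh. exact Hh. Qed.

Lemma STEP_intro e t u c w : Ecall e t c w -> eval (STEP e) [t; u; c] (upd u w).
Proof. intros H. econstructor. constructor. apply imp_proj. constructor.
  rewrite (GU_iff _ _ _ (fun a => nth 0 a 0) (fun a => nth 2 a 0)) by (apply imp_proj). exact H.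
  constructor. apply updE_ok. Qed.

Lemma LOOP_iff e n c s : eval (LOOP e) [n; c] s <-> eval (RPrec (constE 1) (STEP e)) [pred (lenc (lenc c)); c] s.
Proof. unfold LOOP. comp_rw. reflexivity. Qed.

Lemma KM_inv e n c v : eval (KM e) [n; c] v -> exists s w,
  eval (RPrec (constE 1) (STEP e)) [pred (lenc (lenc c)); c] s /\
  Ecall e (pred (lenc (lenc c))) c w /\ v = fin n s w.
Proof. intros H. apply inv_comp in H as (bs & Hb & Hh).
  apply inv_evals_cons in Hb as (v1 & vs & -> & H1 & Hb).
  apply inv_evals_cons in Hb as (v2 & vs' & -> & H2 & Hb).
  apply inv_evals_cons in Hb as (v3 & vs'' & -> & H3 & Hb). apply inv_evals_nil in Hb. subst.
  apply (proj2 (imp_proj 0 _)) in H1. simpl in H1. subst.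
  apply LOOP_iff in H2.
  rewrite (GU_iff _ _ _ (fun a => pred (lenc (lenc (nth 1 a 0)))) (fun a => nth 1 a 0)) in H3
    by (apply Mt_ok || apply imp_proj).
  exists v2, v3. split; [exact H2|]. split; [exact H3|].
  apply (proj2 (finE_ok _)) in Hh. exact Hh. Qed.

Lemma KM_intro e n c s w :
  eval (RPrec (constE 1) (STEP e)) [pred (lenc (lenc c)); c] s ->
  Ecall e (pred (lenc (lenc c))) c w -> eval (KM e) [n; c] (fin n s w).
Proof. intros H2 H3. econstructor. constructor. apply imp_proj. constructor.
  apply LOOP_iff. exact H2. constructor.
  rewrite (GU_iff _ _ _ (fun a => pred (lenc (lenc (nth 1 a 0)))) (fun a => nth 1 a 0))
    by (apply Mt_ok || apply imp_proj). exact H3. constructor.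
  apply finE_ok. Qed.

Lemma loop_inv e c t s : eval (RPrec (constE 1) (STEP e)) [t; c] s ->
  (t = 0 /\ s = 1) \/ (exists t' u w, t = S t' /\ eval (RPrec (constE 1) (STEP e)) [t'; c] u /\ Ecall e t' c w /\ s = upd u w).
Proof. intros H. destruct t.
  - left. split; auto. apply inv_prec0 in H. apply (proj2 (imp_const 1 _)) in H. auto.
  - right. apply inv_precS in H as (u & H1 & H2). apply STEP_inv in H2 as (w & Hw & ->). eauto 7.
Qed.

Lemma loop_intro0 e c : eval (RPrec (constE 1) (STEP e)) [0; c] 1.
Proof. constructor. apply imp_const. Qed.
Lemma loop_introS e c t u w : eval (RPrec (constE 1) (STEP e)) [t; c] u -> Ecall e t c w ->
  eval (RPrec (constE 1) (STEP e)) [S t; c] (upd u w).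
Proof. intros H1 H2. econstructor. exact H1. apply STEP_intro. exact H2. Qed.

Lemma Ecall_pref e p k t w : Ecall e t (code (prefix p k)) w <->
  eval e [t; code (prefix (bpair p zero) (nthc t k))] w.
Proof. unfold Ecall. rewrite prefix_len, trans_K by apply nthc_le. reflexivity. Qed.

Lemma loop_sound e p k r (Hok: forall m j v, eval e [m; code (prefix (bpair p zero) j)] (S v) -> v = r m) :
  forall t s, eval (RPrec (constE 1) (STEP e)) [t; code (prefix p k)] s -> s = 0 \/ s = S (cnt r t).
Proof. induction t; intros s H; apply loop_inv in H as [[H1 H2]|(t' & u & w & H1 & H2 & H3 & H4)].
  - right. subst. reflexivity.
  - discriminate.
  - discriminate.
  - injection H1 as <-. subst s. destruct (IHt _ H2) as [ -> | -> ].
    + left. reflexivity.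
    + destruct w as [|w]. left. unfold upd. simpl. lia.
      right. apply Ecall_pref in H3. apply Hok in H3. subst w.
      unfold upd, b2. cbn [cnt pred negb Nat.eqb]. destruct (r t =? 0); simpl; lia.
Qed.

Lemma loop_exist e c r : forall T, (forall t, t < T -> Ecall e t c (S (r t))) ->
  eval (RPrec (constE 1) (STEP e)) [T; c] (S (cnt r T)).
Proof. induction T; intros H. apply loop_intro0.
  replace (S (cnt r (S T))) with (upd (S (cnt r T)) (S (r T))).
  - apply loop_introS. apply IHT. intros; apply H; lia. apply H; lia.
  - unfold upd, b2. cbn [cnt pred negb Nat.eqb]. destruct (r T =? 0); simpl; lia.
Qed.

Lemma cnt_mono r a b : a <= b -> cnt r a <= cnt r b.
Proof. induction 1; simpl; lia. Qed.
Lemma cnt_S_nz r a : r a <> 0 -> cnt r (S a) = S (cnt r a).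
Proof. intros H. simpl. destruct (Nat.eqb_spec (r a) 0); [contradiction|lia]. Qed.

Lemma minus1_pos r q M n v : minus1 r q -> r M = S v -> cnt r M = n -> v = q n.
Proof. intros Hm H1 H2. destruct (Hm n) as [k [Hk Hc]].
  destruct (Nat.lt_trichotomy M k) as [L|[E|L]].
  - pose proof (cnt_mono r (S M) k L). rewrite cnt_S_nz in H by congruence. lia.
  - subst. congruence.
  - pose proof (cnt_mono r (S k) M L). rewrite cnt_S_nz in H by congruence. lia.
Qed.

Lemma list_choice (P: nat -> nat -> Prop) M : (forall m, m <= M -> exists j, P m j) ->
  exists L, length L = S M /\ forall m, m <= M -> P m (nth m L 0).
Proof. induction M; intros H.
  - destruct (H 0 (le_n 0)) as [j Hj]. exists [j]. split; auto. intros m Hm. inversion Hm; subst. exact Hj.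
  - destruct IHM as [L [HL HP]]. intros m Hm; apply H; lia.
    destruct (H (S M) (le_n _)) as [j Hj]. exists (L ++ [j]). split.
    + rewrite length_app. simpl. lia.
    + intros m Hm. destruct (Nat.eq_dec m (S M)).
      * subst. rewrite app_nth2 by lia. rewrite HL, Nat.sub_diag. exact Hj.
      * rewrite app_nth1 by lia. apply HP. lia.
Qed.

Lemma K_comp K0 : computable K0 -> computable (fun p q => exists r, K0 (bpair p zero) r /\ minus1 r q).
Proof. intros [e He]. exists (KM e). intros p q [r [Hr Hm]] n.
  pose proof (fun m => proj1 (He _ _ Hr m)) as Hex.
  assert (Hok : forall m j v, eval e [m; code (prefix (bpair p zero) j)] (S v) -> v = r m).
  { intros m j v H. exact (proj2 (He _ _ Hr m) j v H). }
  split.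
  - destruct (Hm n) as [M [HM HcM]].
    destruct (list_choice (fun m j => eval e [m; code (prefix (bpair p zero) j)] (S (r m))) M)
      as [L [HL HP]]. { intros m _. apply Hex. }
    exists (code L).
    replace (S (q n)) with (fin n (S (cnt r M)) (S (r M))).
    2:{ unfold fin, b2. rewrite HcM, HM, Nat.eqb_refl. simpl. lia. }
    assert (EM : pred (lenc (lenc (code (prefix p (code L))))) = M).
    { rewrite prefix_len, lenc_code, HL. reflexivity. }
    apply KM_intro; rewrite EM.
    + apply loop_exist. intros t Ht. apply Ecall_pref. rewrite nthc_code. apply HP. lia.
    + apply Ecall_pref. rewrite nthc_code. apply HP. lia.
  - intros k v Hv. apply KM_inv in Hv as (s & w & H1 & H2 & H3).
    set (M := pred (lenc (lenc (code (prefix p k))))) in *.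
    destruct (loop_sound e p k r Hok _ _ H1) as [ -> | -> ].
    + unfold fin, b2 in H3. simpl in H3. discriminate.
    + unfold fin, b2 in H3. destruct (Nat.eqb_spec (S (cnt r M)) (S n)); [|simpl in H3; discriminate].
      destruct (Nat.leb_spec 2 w); [|simpl in H3; discriminate].
      destruct w as [|w]; [lia|]. apply Ecall_pref in H2. apply Hok in H2. subst w.
      simpl in H3. rewrite Nat.add_0_r in H3.
      apply (minus1_pos r q M n v Hm); lia.
Qed.

Lemma bfst_bpair p q : bfst (bpair p q) = p.
Proof. apply functional_extensionality. intros n. unfold bfst, bpair.
  rewrite Nat.even_even, Nat.div2_double. reflexivity. Qed.
Lemma bsnd_bpair p q : bsnd (bpair p q) = q.
Proof. apply functional_extensionality. intros n. unfold bsnd, bpair.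
  rewrite Nat.even_odd, Nat.div2_odd'. reflexivity. Qed.
Lemma TW_bpair p t : TW (bpair p t) = bpair (bpair p zero) (TS t).
Proof. unfold TW, TS. rewrite bfst_bpair. f_equal. apply functional_extensionality; intros m.
  change (bsnd (bpair p t) m) with ((bsnd (bpair p t)) m). rewrite bsnd_bpair. reflexivity. Qed.

Definition pad k (w: baire) : baire := fun i => if i <? k then 0 else w (i - k).
Lemma pad0 w : pad 0 w = w.
Proof. apply functional_extensionality; intros i. unfold pad. simpl. f_equal; lia. Qed.

Definition Gk (G': baire -> baire -> Prop) k : baire -> baire -> Prop := fun z s =>
  (exists q t, minus1 z q /\ G' q t /\ s = pad k (TS t)) \/
  (~ (exists q t, minus1 z q /\ G' q t) /\ s = zero).

Lemma minus1_uniq p q q' : minus1 p q -> minus1 p q' -> q = q'.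
Proof. intros H1 H2. apply functional_extensionality; intros n.
  destruct (H1 n) as [k [Hk Hc]]. apply (minus1_pos p q' k n (q n) H2 Hk Hc). Qed.

Lemma cnt_pad_lo k t i : i <= k -> cnt (pad k (TS t)) i = 0.
Proof. induction i; intros H; simpl. reflexivity. rewrite IHi by lia. unfold pad.
  destruct (Nat.ltb_spec i k); [|lia]. reflexivity. Qed.
Lemma cnt_pad k t m : cnt (pad k (TS t)) (k + m) = m.
Proof. induction m. rewrite Nat.add_0_r. apply cnt_pad_lo; lia.
  rewrite Nat.add_succ_r. simpl. rewrite IHm. unfold pad, TS.
  destruct (Nat.ltb_spec (k + m) k); [lia|]. simpl. lia. Qed.
Lemma minus1_pad k t : minus1 (pad k (TS t)) t.
Proof. intros n. exists (k + n). split.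
  - unfold pad, TS. destruct (Nat.ltb_spec (k + n) k); [lia|]. f_equal. f_equal. lia.
  - apply cnt_pad. Qed.
Lemma no_minus1_zero q : ~ minus1 zero q.
Proof. intros H. destruct (H 0) as [k [Hk _]]. discriminate. Qed.

Lemma Gk_pfun G' k : pfun G' -> pfun (Gk G' k).
Proof. intros HG p s s' H1 H2.
  destruct H1 as [(q & t & Hq & Ht & ->)|[N1 ->]]; destruct H2 as [(q' & t' & Hq' & Ht' & ->)|[N2 ->]].
  - pose proof (minus1_uniq _ _ _ Hq Hq'). subst q'. rewrite (HG _ _ _ Ht Ht'). reflexivity.
  - exfalso. apply N2. eauto.
  - exfalso. apply N1. eauto.
  - reflexivity. Qed.

Lemma Gk_prefix G' k z s : Gk G' k z s -> forall i, i < k -> s i = 0.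
Proof. intros [(q & t & _ & _ & ->)|[_ ->]] i Hi. unfold pad. destruct (Nat.ltb_spec i k); [reflexivity|lia].
  reflexivity. Qed.

Lemma Gk_any (V: space) (G': baire -> baire -> Prop) k z :
  exists s (v: carrier (completion V)), Gk G' k z s /\ rep s v.
Proof. destruct (classic (exists q t, minus1 z q /\ G' q t)) as [E|E].
  - destruct E as (q & t & Hq & Ht). exists (pad k (TS t)).
    destruct (classic (exists y : carrier V, rep t y)) as [[y Hy]|N].
    + exists (Some y). split. left; eauto. simpl. exists t. split; auto. apply minus1_pad.
    + exists None. split. left; eauto. simpl. intros (q' & x & H1 & H2).
      pose proof (minus1_uniq _ _ _ H1 (minus1_pad k t)). subst. eauto.
  - exists zero, None. split. right; auto. simpl. intros (q' & x & H1 & _).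
    apply (no_minus1_zero q'); auto. Qed.

Lemma Gk_real (U V: space) (g: problem U V) G' k : realizes g G' -> realizes (compl_prob g) (Gk G' k).
Proof. intros HR p u Hp _. destruct u as [x|].
  - destruct (classic (pdom g x)) as [D|D].
    + destruct Hp as (q & Hq & Hx). destruct (HR q x Hx D) as (t & y & Ht & Hy & Hg).
      exists (pad k (TS t)), (Some y). split; [left; eauto|]. split.
      * simpl. exists t. split; auto. apply minus1_pad.
      * simpl. intros _. eauto.
    + destruct (Gk_any V G' k p) as (s & v & H1 & H2). exists s, v. split; auto. split; auto.
      simpl. intros D'. contradiction.
  - destruct (Gk_any V G' k p) as (s & v & H1 & H2). exists s, v. split; auto. split; auto.
    simpl. exact I. Qed.

Definition aprime k (b: bool) : baire := fun i => if i =? k then (if b then 2 else 1) else 0.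
Definition Aprime (b: bool) : bool * bool := if b then (true, false) else (false, true).

Lemma aprime_rep k b : @rep Aminus2 (aprime k b) (Aprime b).
Proof. unfold aprime, Aprime; destruct b; simpl; split; split; intros H;
  try (exfalso; discriminate H);
  try (exfalso; apply H; exists k; rewrite Nat.eqb_refl; reflexivity);
  try (destruct H as [i Hi]; destruct (i =? k); discriminate);
  try reflexivity;
  try (intros [i Hi]; destruct (i =? k); discriminate).
Qed.

Lemma contra (H0: baire -> baire -> Prop) e
  (He: forall p q, H0 p q -> forall n k v, eval e [n; code (prefix p k)] (S v) -> v = q n)
  (comb: baire -> baire -> baire) k q0 b :
  eval e [1; code (prefix (comb zero zero) k)] (S (q0 1)) ->
  @rep two_space (bsnd q0) b ->
  (forall a s, (forall i, i < k -> a i = 0) -> (forall i, i < k -> s i = 0) ->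
     prefix (comb a s) k = prefix (comb zero zero) k) ->
  (forall (A: carrier Aminus2) a, rep a A -> (exists b', C2 A b') ->
     exists s q1 b1, (forall i, i < k -> s i = 0) /\ H0 (comb a s) q1 /\
       @rep two_space (bsnd q1) b1 /\ C2 A b1) -> False.
Proof. intros Hev Hb Hpre Hyp.
  destruct (Hyp (Aprime b) (aprime k b) (aprime_rep k b)) as (s & q1 & b1 & Hs & Hq1 & Hb1 & HC).
  { exists (negb b). destruct b; reflexivity. }
  rewrite <- (Hpre (aprime k b) s) in Hev.
  2:{ intros i Hi. unfold aprime. destruct (Nat.eqb_spec i k); [lia|reflexivity]. }
  2:{ exact Hs. }
  apply (He _ _ Hq1) in Hev. simpl in Hb, Hb1. unfold bsnd in Hb, Hb1. simpl in Hb, Hb1.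
  rewrite Hev in Hb. rewrite Hb in Hb1.
  destruct b, b1; simpl in *; try discriminate; unfold C2 in HC; simpl in HC; discriminate.
Qed.

Lemma preW p k a s : (forall i, i < k -> a i = 0) -> (forall i, i < k -> s i = 0) ->
  prefix (bpair (bpair p a) s) k = prefix (bpair (bpair p zero) zero) k.
Proof. intros Ha Hs. unfold prefix. apply map_ext_in. intros i Hi. apply in_seq in Hi.
  pose proof (div2_le i). pose proof (div2_le (Nat.div2 i)).
  unfold bpair. destruct (Nat.even i); [destruct (Nat.even (Nat.div2 i))|].
  - reflexivity.
  - rewrite Ha by lia. reflexivity.
  - rewrite Hs by lia. reflexivity. Qed.

Lemma preS k a s : (forall i, i < k -> a i = 0) -> (forall i, i < k -> s i = 0) ->
  prefix s k = prefix zero k.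
Proof. intros _ Hs. unfold prefix. apply map_ext_in. intros i Hi. apply in_seq in Hi.
  rewrite Hs by lia. reflexivity. Qed.

Lemma rep_pair0 (X: space) p x : rep p x -> @rep (prod_space X Aminus2) (bpair p zero) (x, (true, true)).
Proof. intros Hp. simpl. rewrite bfst_bpair, bsnd_bpair. split; auto.
  simpl. split; split; auto; intros _ [i Hi]; discriminate. Qed.
Lemma rep_pairA (X: space) p x a (A: carrier Aminus2) : rep p x -> rep a A ->
  @rep (prod_space X Aminus2) (bpair p a) (x, A).
Proof. intros Hp Ha. simpl. rewrite bfst_bpair, bsnd_bpair. split; auto. Qed.

Theorem proposition10p3 (X Y U V : space) (f : problem X Y) (g : problem U V) :
  represented X -> represented Y -> represented U -> represented V ->
  (@W_le (prod_space X Aminus2) (prod_space Y two_space) (completion U) (completion V)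
      (prob_prod f C2) (compl_prob g) -> W_le f g) /\
  (@sW_le (prod_space X Aminus2) (prod_space Y two_space) (completion U) (completion V)
      (prob_prod f C2) (compl_prob g) -> sW_le f g).
Proof.
  intros _ _ _ _. split.
  - intros (H0 & K0 & HcH & HcK & Hyp).
    exists (fun z q' => exists q, H0 (TW z) q /\ q' = bfst q),
           (fun p q => exists r, K0 (bpair p zero) r /\ minus1 r q).
    split; [apply HW_comp; auto|]. split; [apply K_comp; auto|].
    intros G' HG HR p x Hp [y0 Hy0].
    assert (D0 : pdom (prob_prod f C2) ((x, (true, true)) : carrier (prod_space X Aminus2)))
      by (exists (y0, true); split; [exact Hy0 | reflexivity]).
    destruct (Hyp (Gk G' 0) (Gk_pfun _ _ HG) (Gk_real _ _ g G' 0 HR) _ _ (rep_pair0 X p x Hp) D0)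
      as (q0 & [y b] & (r & s & Hr & Hs & Hh) & [Hq1 Hq2] & [Hf HC]).
    destruct Hs as [(q & t & Hq & Ht & ->)|[N ->]].
    + exists (bfst q0), y. split; [|split; auto]. exists q, t. split; [eauto|]. split; auto.
      exists q0. split; auto. rewrite TW_bpair. rewrite pad0 in Hh. exact Hh.
    + exfalso. destruct HcH as [e He].
      destruct (proj1 (He _ _ Hh 1)) as [k Hk].
      apply (contra H0 e (fun p q H n => proj2 (He p q H n)) (fun a s => bpair (bpair p a) s) k q0 b Hk Hq2).
      * intros a s Ha Hs. apply preW; auto.
      * intros A a Ha [b' Hb'].
        assert (D1 : pdom (prob_prod f C2) ((x, A) : carrier (prod_space X Aminus2)))
          by (exists (y0, b'); split; [exact Hy0 | exact Hb']).
        destruct (Hyp (Gk G' k) (Gk_pfun _ _ HG) (Gk_real _ _ g G' k HR) _ _ (rep_pairA X p x a A Hp Ha) D1)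
          as (q1 & [y1 b1] & (r' & s' & Hr' & Hs' & Hh') & [_ Hq1'] & [_ HC']).
        exists s', q1, b1. split; [apply (Gk_prefix _ _ _ _ Hs')|]. auto.
  - intros (H0 & K0 & HcH & HcK & Hyp).
    exists (fun z q' => exists q, H0 (TS z) q /\ q' = bfst q),
           (fun p q => exists r, K0 (bpair p zero) r /\ minus1 r q).
    split; [apply HS_comp; auto|]. split; [apply K_comp; auto|].
    intros G' HG HR p x Hp [y0 Hy0].
    assert (D0 : pdom (prob_prod f C2) ((x, (true, true)) : carrier (prod_space X Aminus2)))
      by (exists (y0, true); split; [exact Hy0 | reflexivity]).
    destruct (Hyp (Gk G' 0) (Gk_pfun _ _ HG) (Gk_real _ _ g G' 0 HR) _ _ (rep_pair0 X p x Hp) D0)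
      as (q0 & [y b] & (r & s & Hr & Hs & Hh) & [Hq1 Hq2] & [Hf HC]).
    destruct Hs as [(q & t & Hq & Ht & ->)|[N ->]].
    + exists (bfst q0), y. split; [|split; auto]. exists q, t. split; [eauto|]. split; auto.
      exists q0. split; auto. rewrite pad0 in Hh. exact Hh.
    + exfalso. destruct HcH as [e He].
      destruct (proj1 (He _ _ Hh 1)) as [k Hk].
      apply (contra H0 e (fun p q H n => proj2 (He p q H n)) (fun a s => s) k q0 b Hk Hq2).
      * intros a s Ha Hs. apply (preS k a s); auto.
      * intros A a Ha [b' Hb'].
        assert (D1 : pdom (prob_prod f C2) ((x, A) : carrier (prod_space X Aminus2)))
          by (exists (y0, b'); split; [exact Hy0 | exact Hb']).
        destruct (Hyp (Gk G' k) (Gk_pfun _ _ HG) (Gk_real _ _ g G' k HR) _ _ (rep_pairA X p x a A Hp Ha) D1)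
          as (q1 & [y1 b1] & (r' & s' & Hr' & Hs' & Hh') & [_ Hq1'] & [_ HC']).
        exists s', q1, b1. split; [apply (Gk_prefix _ _ _ _ Hs')|]. auto.
Qed.
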